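(* Let $R$ be a reduced root system in a finite-dimensional real vector space $V$, let $W=W(R)$ be its Weyl group, let $\geq$ be a total ordering of $V$ and let $\{\alpha_1,\ldots,\alpha_r\}$ be the corresponding base of $R$. Let $T=\{t_1,\ldots,t_m\}\subset W$ be a set of reflections, $t_i=s_{\beta_i}$ with $\beta_i\in R^+$. Let $W'$ be the subgroup of $W$ generated by $T$, let $R'=W'\cdot\{\beta_1,\ldots,\beta_m\}$ and let $V'$ be the linear span of $R'$. Then $R'$ is a root system in $V'$ and $W'$ (acting on $V'$ by restriction) is its Weyl group. Furthermore, if $\{\alpha'_1,\ldots,\alpha'_\ell\}$ is the base of $R'$ associated with the total ordering induced by $\geq$ on $V'$, then the set $\{s_{\alpha'_1},\ldots,s_{\alpha'_\ell}\}$ may be obtained from $T$ by a finite sequence of Nielsen transformations.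
   Context: A total ordering of $V$ means a total order compatible with the vector space structure ($x\geq y \iff x-y\geq 0$; $x>0,y>0\Rightarrow x+y>0$; $x>0$, $c>0$ real $\Rightarrow cx>0$). $R^+=\{\alpha\in R:\alpha>0\}$, and the base associated with the ordering is the set of positive roots that are not sums of two positive roots. $s_\alpha$ denotes the reflection in the root $\alpha$. A Nielsen transformation of a finite subset $\{t_1,\ldots,t_m\}$ of a group consists in choosing $i\neq j$ and replacing $t_j$ by $t_it_jt_i^{-1}$ (leaving the other elements unchanged), giving a new subset. *)

(* Defs.v *)
(* V = 'cV[R]_n (column vectors) with R : realType;
   linear maps are n x n matrices acting on the left (M *m v), so matrix
   product is composition of maps; linear forms are row vectors. *)
From HB Require Import structures.
From mathcomp Require Import all_boot all_order all_algebra.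
From mathcomp Require Import reals.
From Stdlib Require Import Relations.
Set Implicit Arguments. Unset Strict Implicit. Unset Printing Implicit Defensive.
Import Order.TTheory GRing.Theory Num.Theory.
Local Open Scope ring_scope.

Section RootDefs.
Variables (R : realType) (n : nat).
Local Notation vec := 'cV[R]_n.
Local Notation mx := 'M[R]_n.

Definition pair (c : 'rV[R]_n) (v : vec) : R := (c *m v) 0 0.

Definition refl (a : vec) (c : 'rV[R]_n) : mx := 1%:M - a *m c.

Definition lspan (S : vec -> Prop) : vec -> Prop :=
  fun v => exists (s : seq vec) (f : vec -> R),
    (forall x, x \in s -> S x) /\ v = \sum_(x <- s) f x *: x.

Definition coroot_for (S : vec -> Prop) (a : vec) (c : 'rV[R]_n) : Prop :=
  pair c a = 2 /\
  forall b, S b -> S (refl a c *m b) /\ exists z : int, pair c b = z%:~R.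

Definition root_system_in (U S : vec -> Prop) : Prop :=
  [/\ exists s : seq vec, forall v, S v <-> v \in s,
      forall v, S v -> U v,
      forall v, U v -> lspan S v,
      ~ S 0
    & forall a, S a -> exists c, coroot_for S a c].

Definition reduced (S : vec -> Prop) : Prop :=
  forall (a : vec) (x : R), S a -> S (x *: a) -> x = 1 \/ x = -1.

(* t is (an extension to V of) the reflection s_a of the root system S *)
Definition refl_in (S : vec -> Prop) (a : vec) (t : mx) : Prop :=
  exists c, coroot_for S a c /\ t = refl a c.

Inductive gen (G : mx -> Prop) : mx -> Prop :=
| gen_one : gen G 1%:M
| gen_base g : G g -> gen G g
| gen_mul g h : gen G g -> gen G h -> gen G (g *m h)
| gen_inv g : gen G g -> gen G (invmx g).

(* Weyl group of S (as matrices on V; for S spanning a proper subspace U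
   these are extensions of the reflections of U) *)
Definition weyl (S : vec -> Prop) : mx -> Prop :=
  gen (fun t => exists a, S a /\ refl_in S a t).

Definition total_ordering (le : vec -> vec -> Prop) : Prop :=
  (forall x, le x x) /\
  (forall x y, le x y -> le y x -> x = y) /\
  (forall x y z, le x y -> le y z -> le x z) /\
  (forall x y, le x y \/ le y x) /\
  (forall x y, le y x <-> le 0 (x - y)) /\
  (forall x y, (le 0 x /\ x <> 0) -> (le 0 y /\ y <> 0) ->
                  le 0 (x + y) /\ x + y <> 0) /\
  (forall x (k : R), (le 0 x /\ x <> 0) -> 0 < k ->
                  le 0 (k *: x) /\ k *: x <> 0).

Definition positive (le : vec -> vec -> Prop) (x : vec) : Prop :=
  le 0 x /\ x <> 0.

Definition base (le : vec -> vec -> Prop) (S : vec -> Prop) : vec -> Prop :=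
  fun a => S a /\ positive le a /\
    ~ (exists b c, S b /\ positive le b /\ S c /\ positive le c /\ a = b + c).

(* Nielsen transformations on finite subsets of GL(V) (finite subsets are
   represented by sequences, considered up to membership). *)
Definition nielsen_step (A B : seq mx) : Prop :=
  exists ti tj, [/\ ti \in A, tj \in A, ti != tj &
    forall x, x \in B <-> ((x \in A /\ x != tj) \/ x = ti *m tj *m invmx ti)].

Definition nielsen_reach : seq mx -> seq mx -> Prop :=
  clos_refl_trans (seq mx) nielsen_step.

End RootDefs.

(* Main.v *)
Require Import Defs.
From HB Require Import structures.
From mathcomp Require Import all_boot all_order all_algebra.
From mathcomp Require Import reals boolp.
From mathcomp Require Import ring lra zify.
From Stdlib Require Import Relations.
Set Implicit Arguments. Unset Strict Implicit. Unset Printing Implicit Defensive.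
Import Order.TTheory GRing.Theory Num.Theory.
Local Open Scope ring_scope.
Section Order.
Variables (R : realType) (n : nat).
Local Notation vec := 'cV[R]_n.
Variable le : vec -> vec -> Prop.
Hypothesis leT : total_ordering le.
Local Notation pos := (positive le).

Lemma ord_refl x : le x x.
Proof. by case: leT. Qed.
Lemma ord_anti x y : le x y -> le y x -> x = y.
Proof. by case: leT => _ [H _]; exact: H. Qed.
Lemma ord_tot x y : le x y \/ le y x.
Proof. by case: leT => _ [_ [_ [H _]]]; exact: H. Qed.
Lemma ord_compat x y : le y x <-> le 0 (x - y).
Proof. by case: leT => _ [_ [_ [_ [H _]]]]; exact: H. Qed.
Lemma pos_add x y : pos x -> pos y -> pos (x + y).
Proof. by case: leT => _ [_ [_ [_ [_ [H _]]]]]; exact: H. Qed.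
Lemma pos_scale x k : pos x -> 0 < k -> pos (k *: x).
Proof. by case: leT => _ [_ [_ [_ [_ [_ H]]]]]; exact: H. Qed.

Lemma nn_add x y : le 0 x -> le 0 y -> le 0 (x + y).
Proof.
move=> hx hy; case: (eqVneq x 0) => [->|xn]; first by rewrite add0r.
case: (eqVneq y 0) => [->|yn]; first by rewrite addr0.
have px : pos x by split => //; apply/eqP.
have py : pos y by split => //; apply/eqP.
by case: (pos_add px py).
Qed.

Lemma pos_nn_add x y : pos x -> le 0 y -> pos (x + y).
Proof.
move=> px hy; case: (eqVneq y 0) => [->|yn]; first by rewrite addr0.
by apply: pos_add => //; split => //; apply/eqP.
Qed.

Lemma nn_scale x k : le 0 x -> 0 <= k -> le 0 (k *: x).
Proof.
move=> hx; rewrite le0r => /orP [/eqP ->|kp]; first by rewrite scale0r; apply: ord_refl.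
case: (eqVneq x 0) => [->|xn]; first by rewrite scaler0; apply: ord_refl.
by case: (@pos_scale x k) => //; split => //; apply/eqP.
Qed.

Lemma pos_opp x : pos x -> ~ pos (- x).
Proof.
move=> [hx xn] [hnx _]; apply: xn; apply: ord_anti => //.
by apply/ord_compat; rewrite sub0r.
Qed.

Lemma trich x : pos x \/ x = 0 \/ pos (- x).
Proof.
case: (eqVneq x 0) => [->|xn]; first by right; left.
have xn' : x <> 0 by apply/eqP.
case: (ord_tot 0 x) => h; first by left.
right; right; split; first by move/ord_compat: h; rewrite sub0r.
by move=> /eqP; rewrite oppr_eq0 => /eqP.
Qed.

Lemma not_pos0 : ~ pos 0.
Proof. by case. Qed.

Definition ltv x y := pos (y - x).

Lemma ltv_trans x y z : ltv x y -> ltv y z -> ltv x z.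
Proof.
rewrite /ltv => h1 h2; have := pos_add h1 h2.
by rewrite addrC addrA subrK.
Qed.

Lemma ltv_irr x : ~ ltv x x.
Proof. by rewrite /ltv subrr; exact: not_pos0. Qed.

Lemma ltv_total x y : x <> y -> ltv x y \/ ltv y x.
Proof.
move=> xy; case: (trich (y - x)) => [h|[h|h]]; first by left.
  by exfalso; apply: xy; apply/eqP; rewrite eq_sym -subr_eq0 h.
by right; rewrite /ltv opprB in h.
Qed.

Lemma ltv_asym x y : ltv x y -> ~ ltv y x.
Proof. by rewrite /ltv => h; rewrite -opprB; exact: pos_opp. Qed.

Lemma nn_comb (s : seq vec) (f : vec -> R) :
  (forall x, x \in s -> le 0 x) -> (forall x, x \in s -> 0 <= f x) ->
  le 0 (\sum_(x <- s) f x *: x).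
Proof.
elim: s => [|y s IH] Hs Hf; first by rewrite big_nil; apply: ord_refl.
rewrite big_cons; apply: nn_add.
  by apply: nn_scale; [apply: Hs | apply: Hf]; rewrite mem_head.
by apply: IH => x xs; [apply: Hs | apply: Hf]; rewrite in_cons xs orbT.
Qed.

Lemma pos_comb (s : seq vec) (f : vec -> R) y :
  (forall x, x \in s -> pos x) -> (forall x, x \in s -> 0 <= f x) ->
  y \in s -> 0 < f y -> pos (\sum_(x <- s) f x *: x).
Proof.
elim: s => [|z s IH] Hs Hf //= ys fy.
rewrite big_cons; move: ys fy; rewrite in_cons => /orP [/eqP ->|ys] fy.
  apply: pos_nn_add; first by apply: pos_scale => //; apply: Hs; rewrite mem_head.
  apply: nn_comb => x xs; [case: (Hs x) | apply: Hf]; by rewrite // in_cons xs orbT.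
rewrite addrC; apply: pos_nn_add.
  by apply: IH => // x xs; [apply: Hs | apply: Hf]; rewrite in_cons xs orbT.
apply: nn_scale; [case: (Hs z) | apply: Hf]; by rewrite // mem_head.
Qed.
End Order.
Section Basic.
Variables (R : realType) (n : nat).
Local Notation vec := 'cV[R]_n.
Local Notation mx := 'M[R]_n.

Lemma pairE (c : 'rV[R]_n) (x : vec) : c *m x = (pair c x)%:M.
Proof. by rewrite /pair -mx11_scalar. Qed.

Lemma refl_vec (a : vec) c x : refl a c *m x = x - pair c x *: a.
Proof. by rewrite /refl mulmxBl mul1mx -mulmxA pairE mul_mx_scalar. Qed.

Lemma refl_invol (a : vec) c : pair c a = 2 -> refl a c *m refl a c = 1%:M.
Proof.
move=> ca; rewrite /refl mulmxBl mul1mx mulmxBr mulmx1 -!mulmxA (mulmxA c) pairE ca.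
rewrite mul_scalar_mx -scalemxAr.
have -> : (2 : R) *: (a *m c) = a *m c + a *m c by rewrite scalerDl scale1r.
set M := a *m c.
by rewrite opprB -addrA addrK addNr addr0.
Qed.

Lemma refl_unit (a : vec) c : pair c a = 2 -> refl a c \in unitmx.
Proof. by move=> ca; case: (mulmx1_unit (refl_invol ca)). Qed.

Lemma invmx_uniq (A B : mx) : A *m B = 1%:M -> invmx A = B.
Proof.
move=> AB; have [UA UB] := mulmx1_unit AB.
by rewrite -[LHS]mulmx1 -AB mulmxA mulVmx // mul1mx.
Qed.

Lemma invmx_mul (A B : mx) : A \in unitmx -> B \in unitmx ->
  invmx (A *m B) = invmx B *m invmx A.
Proof.
move=> UA UB; apply: invmx_uniq.
by rewrite mulmxA -(mulmxA A) mulmxV // mulmx1 mulmxV.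
Qed.

Lemma invmx_refl (a : vec) c : pair c a = 2 -> invmx (refl a c) = refl a c.
Proof.
by move=> ca; apply: invmx_uniq; rewrite refl_invol.
Qed.

Lemma pair_lin (c : 'rV[R]_n) (x y : vec) (k : R) : pair c (k *: x + y) = k * pair c x + pair c y.
Proof. by rewrite /pair mulmxDr -scalemxAr !mxE. Qed.

Lemma pair_add (c : 'rV[R]_n) (x y : vec) : pair c (x + y) = pair c x + pair c y.
Proof. by rewrite /pair mulmxDr mxE. Qed.
Lemma pair_scale (c : 'rV[R]_n) (x : vec) k : pair c (k *: x) = k * pair c x.
Proof. by rewrite /pair -scalemxAr mxE. Qed.
Lemma pair_opp (c : 'rV[R]_n) (x : vec) : pair c (- x) = - pair c x.
Proof. by rewrite /pair mulmxN mxE. Qed.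
Lemma pair_sub (c : 'rV[R]_n) (x y : vec) : pair c (x - y) = pair c x - pair c y.
Proof. by rewrite pair_add pair_opp. Qed.

Lemma lin2 (y a : vec) (s t : R) : y + s *: a + t *: a = y + (s + t) *: a.
Proof. by rewrite -addrA -scalerDl. Qed.
Lemma lin2s (y a : vec) (s t : R) : y - s *: a - t *: a = y + (- s - t) *: a.
Proof. by rewrite -!scaleNr lin2. Qed.
Lemma lin1s (y a : vec) (s : R) : y - s *: a = y + (- s) *: a.
Proof. by rewrite scaleNr. Qed.

Lemma mx_ext (A B : mx) : (forall x : vec, A *m x = B *m x) -> A = B.
Proof.
move=> H; apply/matrixP => i j.
have := H (delta_mx j 0); rewrite -!colE => /matrixP /(_ i 0).
by rewrite !mxE.
Qed.

Lemma rv_ext (c d : 'rV[R]_n) : (forall x : vec, pair c x = pair d x) -> c = d.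
Proof.
move=> H; apply/matrixP => i j.
have := H (delta_mx j 0); rewrite /pair -!colE !mxE.
by rewrite !ord1.
Qed.
End Basic.
Section Form.
Variables (R : realType) (n : nat).
Local Notation vec := 'cV[R]_n.
Local Notation mx := 'M[R]_n.
Variable RS : vec -> Prop.
Hypothesis RSsys : root_system_in (fun _ => True) RS.

Let rs_fin : exists s : seq vec, forall v, RS v <-> v \in s.
Proof. by case: RSsys. Qed.

Definition sl : seq vec := undup (proj1_sig (cid rs_fin)).

Lemma slP v : RS v <-> v \in sl.
Proof. by rewrite mem_undup; exact: (proj2_sig (cid rs_fin)). Qed.

Lemma sl_uniq : uniq sl.
Proof. exact: undup_uniq. Qed.

Lemma RS0 : ~ RS 0.
Proof. by case: RSsys. Qed.

Lemma RS_span x : lspan RS x.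
Proof. by case: RSsys => _ _ H _ _; exact: H. Qed.

Lemma RS_coroot a : RS a -> exists c, coroot_for RS a c.
Proof. by case: RSsys => _ _ _ _ H; exact: H. Qed.

Definition G : mx := \sum_(b <- sl) b *m b^T.

Lemma G_sym : G^T = G.
Proof.
rewrite /G linear_sum /=.
by apply: eq_bigr => b _; rewrite trmx_mul trmxK.
Qed.

Lemma dot_sq (y : vec) : (y^T *m y) 0 0 = \sum_i (y i 0) ^+ 2.
Proof. by rewrite !mxE; apply: eq_bigr => i _; rewrite !mxE expr2. Qed.

Lemma zero_of_orth (y : vec) : (forall b, RS b -> (b^T *m y) 0 0 = 0) -> y = 0.
Proof.
move=> H.
have Hx : forall x : vec, (x^T *m y) 0 0 = 0.
  move=> x; case: (RS_span x) => s [f [Hs ->]].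
  rewrite linear_sum mulmx_suml summxE.
  rewrite big1_seq // => b /andP [_ bs].
  by rewrite linearZ /= -scalemxAl mxE H ?mulr0 //; apply: Hs.
have := Hx y; rewrite dot_sq => /eqP; rewrite psumr_eq0; last by move=> i _; exact: sqr_ge0.
move=> /allP A; apply/matrixP => i j; rewrite ord1 mxE.
by have := A i (mem_index_enum _); rewrite sqrf_eq0 => /eqP.
Qed.

Lemma quadG (y : vec) : (y^T *m G *m y) 0 0 = \sum_(b <- sl) ((b^T *m y) 0 0) ^+ 2.
Proof.
rewrite /G mulmx_sumr mulmx_suml summxE; apply: eq_bigr => b _.
rewrite mulmxA -mulmxA -[y^T *m b]trmxK trmx_mul trmxK.
by rewrite mxE big_ord1 mxE expr2.
Qed.

Lemma quadG0 (y : vec) : (y^T *m G *m y) 0 0 = 0 -> y = 0.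
Proof.
rewrite quadG => /eqP; rewrite psumr_eq0; last by move=> b _; exact: sqr_ge0.
move=> /allP A; apply: zero_of_orth => b /slP bs.
by have := A b bs; rewrite sqrf_eq0 => /eqP.
Qed.

Lemma quadG_ge0 (y : vec) : 0 <= (y^T *m G *m y) 0 0.
Proof. by rewrite quadG; apply: sumr_ge0 => b _; exact: sqr_ge0. Qed.

Lemma G_unit : G \in unitmx.
Proof.
rewrite -row_free_unit; apply: inj_row_free => v vG.
have : (v^T^T *m G *m v^T) 0 0 = 0 by rewrite trmxK vG mul0mx mxE.
by move/quadG0 => /(congr1 trmx); rewrite trmxK trmx0.
Qed.

Definition Gi : mx := invmx G.

Lemma Gi_sym : Gi^T = Gi.
Proof. by rewrite /Gi trmx_inv G_sym. Qed.

Definition ip (x y : vec) : R := (x^T *m Gi *m y) 0 0.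

Lemma ip_sym x y : ip x y = ip y x.
Proof.
have tr11 : forall A : 'M[R]_1, A^T 0 0 = A 0 0 by move=> A; rewrite mxE.
by rewrite /ip -tr11 !trmx_mul trmxK Gi_sym mulmxA.
Qed.

Lemma ip_linr x y z (k : R) : ip x (k *: y + z) = k * ip x y + ip x z.
Proof. by rewrite /ip mulmxDr -scalemxAr !mxE. Qed.

Lemma ip_linl x y z (k : R) : ip (k *: y + z) x = k * ip y x + ip z x.
Proof. by rewrite ip_sym ip_linr (ip_sym x) (ip_sym x). Qed.

Lemma ip_pos x : x != 0 -> 0 < ip x x.
Proof.
move=> xn0; set y := Gi *m x.
have xE : x = G *m y by rewrite /y mulmxA mulmxV ?G_unit // mul1mx.
have -> : ip x x = (y^T *m G *m y) 0 0.
  rewrite /ip {1}xE trmx_mul G_sym -!mulmxA (mulmxA G) mulmxV ?G_unit //.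
rewrite lt_def quadG_ge0 andbT; apply/eqP => /quadG0 y0.
by move: xn0; rewrite xE y0 mulmx0 eqxx.
Qed.


Lemma ip_oppl x y : ip (- x) y = - ip x y.
Proof. by rewrite /ip linearN /= !mulNmx mxE. Qed.
Lemma ip_oppr x y : ip x (- y) = - ip x y.
Proof. by rewrite ip_sym ip_oppl ip_sym. Qed.
Lemma ip_scalel k x y : ip (k *: x) y = k * ip x y.
Proof. by rewrite /ip linearZ /= -!scalemxAl mxE. Qed.
Lemma ip_scaler k x y : ip x (k *: y) = k * ip x y.
Proof. by rewrite ip_sym ip_scalel ip_sym. Qed.
Lemma ip_addl x y z : ip (x + y) z = ip x z + ip y z.
Proof. by rewrite /ip linearD /= !mulmxDl mxE. Qed.
Lemma ip_addr x y z : ip z (x + y) = ip z x + ip z y.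
Proof. by rewrite ip_sym ip_addl !(ip_sym z). Qed.
Lemma ip_subl x y z : ip (x - y) z = ip x z - ip y z.
Proof. by rewrite ip_addl ip_oppl. Qed.
Lemma ip_subr x y z : ip z (x - y) = ip z x - ip z y.
Proof. by rewrite ip_addr ip_oppr. Qed.
Lemma ip0l x : ip 0 x = 0.
Proof. by rewrite /ip trmx0 !mul0mx mxE. Qed.
Lemma ip0r x : ip x 0 = 0.
Proof. by rewrite ip_sym ip0l. Qed.

Lemma RS_neq0 a : RS a -> a != 0.
Proof. by move=> Ha; apply/eqP => a0; apply: RS0; rewrite -a0. Qed.

Lemma ipaa_gt0 a : RS a -> 0 < ip a a.
Proof. by move/RS_neq0/ip_pos. Qed.

Lemma G_perm (t : mx) : t *m t = 1%:M -> (forall b, RS b -> RS (t *m b)) ->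
  t *m G *m t^T = G.
Proof.
move=> tt tRS.
have -> : t *m G *m t^T = \sum_(b <- map (mulmx t) sl) b *m b^T.
  rewrite big_map /G mulmx_sumr mulmx_suml; apply: eq_bigr => b _.
  by rewrite trmx_mul !mulmxA.
apply: perm_big; apply: uniq_perm.
- rewrite map_inj_in_uniq ?sl_uniq // => x y _ _ /(congr1 (mulmx t)).
  by rewrite !mulmxA tt !mul1mx.
- exact: sl_uniq.
move=> b; apply/mapP/idP => [[b' /slP b'S ->]|/slP bS].
  by apply/slP; apply: tRS.
exists (t *m b); first by apply/slP; apply: tRS.
by rewrite mulmxA tt mul1mx.
Qed.

Lemma ip_inv (t : mx) : t *m t = 1%:M -> (forall b, RS b -> RS (t *m b)) ->
  forall x y, ip (t *m x) (t *m y) = ip x y.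
Proof.
move=> tt tRS x y.
have Ut : t \in unitmx by case: (mulmx1_unit tt).
have UtT : t^T \in unitmx by rewrite unitmx_tr.
have it : invmx t = t by apply: invmx_uniq.
have E : t^T *m Gi *m t = Gi.
  rewrite /Gi -{2}(G_perm tt tRS) invmx_mul ?unitmx_mul ?Ut ?G_unit //.
  by rewrite invmx_mul ?G_unit // it -trmx_inv it mulmxA.
by rewrite /ip trmx_mul -[in RHS]E !mulmxA.
Qed.

Lemma coroot_formula a c : RS a -> coroot_for RS a c ->
  forall x, pair c x = 2 * ip a x / ip a a.
Proof.
move=> Ha [ca Hc] x.
have tt := refl_invol ca.
have tRS : forall b, RS b -> RS (refl a c *m b) by move=> b /Hc [].
have := ip_inv tt tRS x a.
rewrite !refl_vec ca.
have -> : a - 2 *: a = - a by rewrite scalerDl scale1r opprD addrA subrr add0r.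
rewrite ip_oppr ip_subl ip_scalel => E.
have aa := ipaa_gt0 Ha.
apply: (@mulIf _ (ip a a)); first by rewrite gt_eqF.
rewrite mulfVK ?gt_eqF //.
by rewrite (ip_sym a x); lra.
Qed.

Definition cr (a : vec) : 'rV[R]_n := (2 / ip a a) *: (a^T *m Gi).

Lemma pair_cr a x : pair (cr a) x = 2 * ip a x / ip a a.
Proof. by rewrite /pair /cr -scalemxAl mxE /ip; rewrite mulrAC. Qed.

Lemma coroot_eq a c : RS a -> coroot_for RS a c -> c = cr a.
Proof.
move=> Ha Hc; apply: rv_ext => x.
by rewrite (coroot_formula Ha Hc) pair_cr.
Qed.

Lemma cr_coroot a : RS a -> coroot_for RS a (cr a).
Proof.
move=> Ha; case: (RS_coroot Ha) => c Hc.
by rewrite -(coroot_eq Ha Hc).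
Qed.

Definition rf (a : vec) : mx := refl a (cr a).

Lemma refl_inE a t : RS a -> (refl_in RS a t <-> t = rf a).
Proof.
move=> Ha; split => [[c [Hc ->]]|->]; first by rewrite /rf -(coroot_eq Ha Hc).
by exists (cr a); split => //; exact: cr_coroot.
Qed.

Lemma pair_cr_self a : RS a -> pair (cr a) a = 2.
Proof. by move/cr_coroot => []. Qed.

Lemma rf_RS a b : RS a -> RS b -> RS (rf a *m b).
Proof. by move=> /cr_coroot [_ H] /H []. Qed.

Lemma rf_int a b : RS a -> RS b -> exists z : int, pair (cr a) b = z%:~R.
Proof. by move=> /cr_coroot [_ H] /H []. Qed.

Lemma rf_invol a : RS a -> rf a *m rf a = 1%:M.
Proof. by move/pair_cr_self/refl_invol. Qed.

Lemma rf_vec a x : rf a *m x = x - pair (cr a) x *: a.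
Proof. exact: refl_vec. Qed.

Lemma rf_neg a : RS a -> rf a *m a = - a.
Proof.
move=> Ha; rewrite rf_vec pair_cr_self //.
by rewrite scalerDl scale1r opprD addrA subrr add0r.
Qed.

Lemma ip_rf a x y : RS a -> ip (rf a *m x) (rf a *m y) = ip x y.
Proof. by move=> Ha; apply: ip_inv; [exact: rf_invol | move=> b; exact: rf_RS]. Qed.

Lemma cr_opp a : cr (- a) = - cr a.
Proof. by rewrite /cr ip_oppl ip_oppr opprK linearN /= mulNmx scalerN. Qed.

Lemma rf_opp a : rf (- a) = rf a.
Proof. by rewrite /rf /refl cr_opp mulNmx mulmxN opprK. Qed.

Lemma rf_unit a : RS a -> rf a \in unitmx.
Proof. by move/pair_cr_self/refl_unit. Qed.

Lemma invmx_rf a : RS a -> invmx (rf a) = rf a.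
Proof. by move/pair_cr_self/invmx_refl. Qed.
Hypothesis RSred : reduced RS.

Lemma CS_strict x y : y != 0 -> (forall t : R, x != t *: y) ->
  ip x y ^+ 2 < ip x x * ip y y.
Proof.
move=> yn H; have yy := ip_pos yn.
set t := ip x y / ip y y.
have zn : x - t *: y != 0 by rewrite subr_eq0; exact: H.
have := ip_pos zn.
rewrite ip_subl !ip_subr !ip_scalel !ip_scaler (ip_sym y x) /t => h.
set e := (X in 0 < X) in h.
have Ee : ip y y * e = ip x x * ip y y - ip x y ^+ 2.
  by rewrite /e; field; rewrite gt_eqF.
have := mulr_gt0 yy h; rewrite Ee subr_gt0; by [].
Qed.

Lemma roots_nonprop a b : RS a -> RS b -> b != a -> b != - a ->
  forall t : R, b != t *: a.
Proof.
move=> Ha Hb ba bna t; apply/eqP => bE.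
have := RSred Ha (eq_ind _ RS Hb _ bE) => [[t1|t1]].
  by move: ba; rewrite bE t1 scale1r eqxx.
by move: bna; rewrite bE t1 scaleN1r eqxx.
Qed.

Lemma kl_lt4 a b : RS a -> RS b -> b != a -> b != - a ->
  pair (cr a) b * pair (cr b) a < 4.
Proof.
move=> Ha Hb ba bna.
have aa := ipaa_gt0 Ha; have bb := ipaa_gt0 Hb.
have := CS_strict (RS_neq0 Ha) (roots_nonprop Ha Hb ba bna).
rewrite !pair_cr (ip_sym b a) => h.
have -> : 2 * ip a b / ip a a * (2 * ip a b / ip b b) = 4 * (ip a b ^+ 2 / (ip b b * ip a a)).
  by field; rewrite !gt_eqF.
rewrite -[X in _ < X]mulr1 ltr_pM2l // ltr_pdivrMr ?mulr_gt0 // mul1r.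
exact: h.
Qed.

Lemma pair_cr_sign a b : RS a ->
  ((0 < pair (cr a) b) = (0 < ip a b)) /\ ((pair (cr a) b == 0) = (ip a b == 0))
  /\ ((pair (cr a) b < 0) = (ip a b < 0)).
Proof.
move=> Ha; have aa := ipaa_gt0 Ha; rewrite pair_cr.
rewrite -mulrA; split; first by rewrite pmulr_rgt0 // pmulr_lgt0 // invr_gt0.
split; first by rewrite !mulf_eq0 invr_eq0 (gt_eqF aa) orbF pnatr_eq0.
by rewrite pmulr_rlt0 // pmulr_llt0 // invr_gt0.
Qed.

Lemma cartan a b : RS a -> RS b -> b != a -> b != - a ->
  exists k l : int, [/\ pair (cr a) b = k%:~R, pair (cr b) a = l%:~R,
    (k * l < 4)%R, (0 < k) = (0 < l) & (k < 0) = (l < 0)].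
Proof.
move=> Ha Hb ba bna.
case: (rf_int Ha Hb) => k Ek; case: (rf_int Hb Ha) => l El.
exists k, l; split => //.
- have := kl_lt4 Ha Hb ba bna; rewrite Ek El -intrM.
  by rewrite -[4 : R]/((4 : int)%:~R) ltr_int.
- have [s1 _] := pair_cr_sign b Ha; have [s2 _] := pair_cr_sign a Hb.
  by move: s1 s2; rewrite Ek El !ltr0z (ip_sym b a) => -> ->.
- have [_ [_ s1]] := pair_cr_sign b Ha; have [_ [_ s2]] := pair_cr_sign a Hb.
  by move: s1 s2; rewrite Ek El !ltrz0 (ip_sym b a) => -> ->.
Qed.
Lemma gen_mono (G1 G2 : mx -> Prop) w : (forall t, G1 t -> G2 t) -> gen G1 w -> gen G2 w.
Proof.
move=> H; elim => [|g Hg|g h _ IH1 _ IH2|g _ IH].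
- exact: gen_one.
- by apply: gen_base; apply: H.
- exact: gen_mul.
- exact: gen_inv.
Qed.

Lemma gen_unit (G0 : mx -> Prop) w : (forall t, G0 t -> t \in unitmx) -> gen G0 w -> w \in unitmx.
Proof.
move=> H; elim => [|g Hg|g h _ IH1 _ IH2|g _ IH].
- exact: unitmx1.
- exact: H.
- by rewrite unitmx_mul IH1.
- by rewrite unitmx_inv.
Qed.

Definition good (w : mx) := [/\ w \in unitmx, (forall b, RS b -> RS (w *m b))
  & (forall b, RS b -> RS (invmx w *m b))].

Lemma good_rf a : RS a -> good (rf a).
Proof.
move=> Ha; split; first exact: rf_unit.
  by move=> b; exact: rf_RS.
by rewrite invmx_rf // => b; exact: rf_RS.
Qed.

Lemma good_gen (G0 : mx -> Prop) w : (forall t, G0 t -> good t) -> gen G0 w -> good w.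
Proof.
move=> H; elim => [|g Hg|g h _ [U1 A1 B1] _ [U2 A2 B2]|g _ [U A B]].
- by split; [exact: unitmx1 | move=> b; rewrite mul1mx | move=> b; rewrite invmx1 mul1mx].
- exact: H.
- split; first by rewrite unitmx_mul U1.
    by move=> b Hb; rewrite -mulmxA; apply: A1; apply: A2.
  by move=> b Hb; rewrite invmx_mul // -mulmxA; apply: B2; apply: B1.
- by split; [rewrite unitmx_inv | exact: B | rewrite invmxK].
Qed.

Lemma conj_rf w a : good w -> RS a -> rf (w *m a) = w *m rf a *m invmx w.
Proof.
move=> [U A B] Ha.
have Hwa : RS (w *m a) by apply: A.
set c := cr a *m invmx w.
have E : refl (w *m a) c = w *m rf a *m invmx w.
  by rewrite /refl /rf /c mulmxBr mulmx1 mulmxBl mulmxV // !mulmxA.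
have cc : coroot_for RS (w *m a) c.
  split; first by rewrite /pair /c -mulmxA (mulmxA (invmx w)) mulVmx // mul1mx; exact: pair_cr_self.
  move=> b Hb; split.
    rewrite E -!mulmxA; apply: (A _); apply: rf_RS => //; exact: (B _ Hb).
  case: (rf_int Ha (B _ Hb)) => z Hz; exists z.
  by rewrite /pair /c -mulmxA -Hz.
by rewrite /rf -(coroot_eq Hwa cc) E.
Qed.
Variable le : vec -> vec -> Prop.
Hypothesis leT : total_ordering le.
Variable TB : seq (vec * mx).
Hypothesis HTB : forall p, p \in TB -> [/\ RS p.1, positive le p.1 & refl_in RS p.1 p.2].

Definition Tl := [seq p.2 | p <- TB].
Definition bl := [seq p.1 | p <- TB].
Definition Wp := gen (fun t => t \in Tl).
Definition Rp := fun v => exists w b, [/\ Wp w, b \in bl & v = w *m b].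
Definition Vp := lspan Rp.

Lemma bl_RS b : b \in bl -> RS b /\ positive le b /\ rf b \in Tl.
Proof.
move=> /mapP [p pT ->]; case: (HTB pT) => H1 H2 H3; split => //; split => //.
by apply/mapP; exists p => //; apply/esym/(refl_inE _ H1).
Qed.

Lemma Tl_rf t : t \in Tl -> exists b, b \in bl /\ t = rf b.
Proof.
move=> /mapP [p pT ->]; case: (HTB pT) => H1 H2 H3; exists p.1; split.
  by apply/mapP; exists p.
by apply/(refl_inE _ H1).
Qed.

Lemma Wp_good w : Wp w -> good w.
Proof.
apply: good_gen => t /Tl_rf [b [bb ->]]; apply: good_rf.
by case: (bl_RS bb).
Qed.

Lemma Rp_RS v : Rp v -> RS v.
Proof.
move=> [w [b [Hw Hb ->]]]; case: (Wp_good Hw) => _ A _; apply: A.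
by case: (bl_RS Hb).
Qed.

Lemma Rp_W w v : Wp w -> Rp v -> Rp (w *m v).
Proof.
move=> Hw [w' [b [Hw' Hb ->]]]; exists (w *m w'), b; split => //.
  exact: gen_mul.
by rewrite mulmxA.
Qed.

Lemma bl_Rp b : b \in bl -> Rp b.
Proof. by move=> Hb; exists 1%:M, b; split => //; [exact: gen_one | rewrite mul1mx]. Qed.

Lemma rf_Wp a : Rp a -> Wp (rf a).
Proof.
move=> [w [b [Hw Hb ->]]].
have [Hb1 [_ Hb3]] := bl_RS Hb.
rewrite conj_rf //; last exact: Wp_good.
apply: gen_mul; first apply: gen_mul => //; first exact: gen_base.
exact: gen_inv.
Qed.

Lemma Rp_rf a b : Rp a -> Rp b -> Rp (rf a *m b).
Proof. by move=> Ha Hb; apply: Rp_W => //; exact: rf_Wp. Qed.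

Lemma Rp_opp a : Rp a -> Rp (- a).
Proof. by move=> Ha; rewrite -(rf_neg (Rp_RS Ha)); exact: Rp_rf. Qed.

Definition rl : seq vec := [seq v <- sl | `[< Rp v >]].

Lemma rlP v : Rp v <-> v \in rl.
Proof.
rewrite mem_filter; split => [H|/andP [/asboolP H _]] //.
by rewrite (asboolT H) /=; apply/slP; exact: Rp_RS.
Qed.

Lemma rl_uniq : uniq rl.
Proof. by rewrite filter_uniq // sl_uniq. Qed.

Lemma lspan_W w u : w \in unitmx -> (forall v, Rp v -> Rp (w *m v)) -> Vp u -> Vp (w *m u).
Proof.
move=> U Hw [s [f [Hs ->]]].
exists (map (mulmx w) s), (fun z => f (invmx w *m z)); split.
  by move=> x /mapP [y ys ->]; apply: Hw; apply: Hs.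
rewrite big_map mulmx_sumr; apply: eq_bigr => y _.
by rewrite mulmxA mulVmx // mul1mx scalemxAr.
Qed.

Lemma Vp_W w u : Wp w -> Vp u -> Vp (w *m u).
Proof.
move=> Hw; apply: lspan_W; first by case: (Wp_good Hw).
by move=> v; exact: Rp_W.
Qed.

Lemma Rp_Vp v : Rp v -> Vp v.
Proof.
move=> H; exists [:: v], (fun _ => 1); split; last by rewrite big_seq1 scale1r.
by move=> x; rewrite inE => /eqP ->.
Qed.
Lemma pair_sum (c : 'rV[R]_n) (s : seq vec) (f : vec -> R) :
  pair c (\sum_(y <- s) f y *: y) = \sum_(y <- s) f y * pair c y.
Proof.
rewrite /pair mulmx_sumr summxE; apply: eq_bigr => y _.
by rewrite -scalemxAr mxE.
Qed.

Lemma coroot_unique_Rp a c : Rp a -> coroot_for Rp a c ->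
  forall x, Rp x -> pair c x = pair (cr a) x.
Proof.
move=> Ha [ca Hc] x Hx.
have HaR := Rp_RS Ha.
have cra := pair_cr_self HaR.
set f := fun y => pair c y - pair (cr a) y.
have flin : forall k : R, f (x + k *: a) = f x.
  by move=> k; rewrite /f !pair_add !pair_scale ca cra; ring.
have step : forall y, Rp y -> Rp (y + f y *: a).
  move=> y Hy; have := Rp_rf Ha (proj1 (Hc y Hy)).
  congr Rp; rewrite rf_vec refl_vec pair_sub pair_scale cra lin2s /f.
  by congr (_ + _ *: _); ring.
have iter : forall k : nat, Rp (x + (k%:R * f x) *: a).
  elim => [|k IH]; first by rewrite mul0r scale0r addr0.
  have := step _ IH; rewrite flin lin2; congr (Rp (_ + _ *: _)).
  by rewrite -natr1; ring.
case: (eqVneq (f x) 0) => [/eqP|fn]; first by rewrite subr_eq0 => /eqP.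
exfalso.
set L := map (fun k : nat => x + (k%:R * f x) *: a) (iota 0 (size rl).+1).
have uL : uniq L.
  rewrite map_inj_in_uniq ?iota_uniq // => k1 k2 _ _ /addrI /eqP.
  rewrite -subr_eq0 -scalerBl scaler_eq0 (negbTE (RS_neq0 HaR)) orbF.
  by rewrite -mulrBl mulf_eq0 (negbTE fn) orbF subr_eq0 eqr_nat => /eqP.
have sL : {subset L <= rl}.
  by move=> z /mapP [k _ ->]; apply/rlP.
have := uniq_leq_size uL sL; rewrite size_map size_iota.
by rewrite ltnn.
Qed.
Lemma Vp_pair_eq (c d : 'rV[R]_n) : (forall x, Rp x -> pair c x = pair d x) ->
  forall u, Vp u -> pair c u = pair d u.
Proof.
move=> H u [s [f [Hs ->]]]; rewrite !pair_sum; apply: eq_big_seq => y ys.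
by rewrite H //; apply: Hs.
Qed.

Lemma cr_coroot_Rp a : Rp a -> coroot_for Rp a (cr a).
Proof.
move=> Ha; have HaR := Rp_RS Ha; split; first exact: pair_cr_self.
move=> b Hb; split; first exact: Rp_rf.
exact: rf_int (Rp_RS Hb).
Qed.

Lemma part1 : root_system_in Vp Rp.
Proof.
split.
- by exists rl => v; exact: rlP.
- exact: Rp_Vp.
- by [].
- by move/Rp_RS; exact: RS0.
- by move=> a Ha; exists (cr a); exact: cr_coroot_Rp.
Qed.

Lemma part2 w : Wp w -> exists h, weyl Rp h /\ forall u, Vp u -> w *m u = h *m u.
Proof.
move=> Hw; exists w; split => //; apply: gen_mono Hw => t /Tl_rf [b [bb ->]].
exists b; split; first exact: bl_Rp.
by exists (cr b); split => //; apply: cr_coroot_Rp; exact: bl_Rp.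
Qed.

Lemma weyl_unit h : weyl Rp h -> h \in unitmx.
Proof.
apply: gen_unit => t [a [Ha [c [[ca _] ->]]]]; exact: refl_unit.
Qed.

Lemma part3 h : weyl Rp h -> exists w, Wp w /\ forall u, Vp u -> w *m u = h *m u.
Proof.
move=> Hh; elim: Hh => [|t [a [Ha [c [Hc ->]]]]|g h' Hg [w1 [W1 E1]] Hh' [w2 [W2 E2]]|g Hg [w [W E]]].
- by exists 1%:M; split => //; exact: gen_one.
- exists (rf a); split; first exact: rf_Wp.
  move=> u Hu; rewrite rf_vec refl_vec.
  by rewrite (Vp_pair_eq (coroot_unique_Rp Ha Hc) Hu).
- exists (w1 *m w2); split; first exact: gen_mul.
  move=> u Hu; rewrite -!mulmxA E2 // E1 //.
  by rewrite -E2 //; apply: Vp_W.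
- exists (invmx w); split; first exact: gen_inv.
  move=> u Hu.
  have Uw : w \in unitmx by case: (Wp_good W).
  have Ug : g \in unitmx by apply: weyl_unit.
  set v := invmx w *m u.
  have Hv : Vp v by apply: Vp_W => //; exact: gen_inv.
  have wv : w *m v = u by rewrite /v mulmxA mulmxV // mul1mx.
  have gv : g *m v = u by rewrite -E.
  by rewrite -gv mulmxA mulVmx // mul1mx.
Qed.
Local Notation pos := (positive le).
Local Notation ltv := (ltv le).

Ltac vring := apply/matrixP => i j; rewrite !mxE; ring.
Ltac vfield := apply/matrixP => i j; rewrite !mxE; field.

Lemma pos_neq_opp x y : pos x -> pos y -> y != - x.
Proof. by move=> px py; apply/eqP => yE; move: py; rewrite yE; apply: (pos_opp leT). Qed.

Lemma core_ord x y : RS x -> RS y -> pos x -> pos y -> ltv x y -> 0 < ip x y ->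
  (exists z, [/\ pos z, z = rf x *m y \/ z = - (rf x *m y) & ltv z y]) \/
  (exists z, [/\ pos z, z = rf y *m x \/ z = - (rf y *m x) & ltv z x]).
Proof.
move=> Hx Hy px py lxy ipp.
have yx : y != x by apply/eqP => E; move: lxy; rewrite E; apply: ltv_irr.
have ynx := pos_neq_opp px py.
have np := roots_nonprop Hx Hy yx ynx.
case: (cartan Hx Hy yx ynx) => k [l [Ek El kl s1 s2]].
have kp : (0 < k)%R by rewrite -(ltr0z R) -Ek (proj1 (pair_cr_sign y Hx)).
have lp : (0 < l)%R by rewrite -s1.
have kR : (0 : R) < k%:~R by rewrite ltr0z.
have Hrx : rf x *m y = y - k%:~R *: x by rewrite rf_vec Ek.
have Hry : rf y *m x = x - l%:~R *: y by rewrite rf_vec El.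
have yk : y - k%:~R *: x != 0 by rewrite subr_eq0; exact: np.
have [k2|[k3 l1]] : (k <= 2)%R \/ (k = 3 /\ l = 1) by nia.
- left; case: (trich leT (y - k%:~R *: x)) => [h|[h|h]].
  + exists (y - k%:~R *: x); split => //; first by left.
    by rewrite /ltv (_ : y - (y - k%:~R *: x) = k%:~R *: x); [exact: pos_scale | vring].
  + by rewrite h eqxx in yk.
  + exists (- (y - k%:~R *: x)); split => //; first by right; rewrite Hrx.
    have [k1|k2'] : k = 1 \/ k = 2 by lia.
    * rewrite k1 /ltv (_ : y - - (y - 1%:~R *: x) = y + (y - x)); last by vring.
      by apply: (pos_add leT).
    * rewrite k2' /ltv (_ : y - - (y - 2%:~R *: x) = 2%:R *: (y - x)); last by vring.
      by apply: (pos_scale leT).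
- have hx : y - 3%:~R *: x != 0 by rewrite -k3.
  have ny : (2 : R) *: y != (3 : R) *: x.
    apply/eqP => E; have := np ((3 : R) / 2).
    have -> : y = (1/2 : R) *: ((2 : R) *: y) by vfield.
    by rewrite E scalerA mul1r mulrC eqxx.
  case: (trich leT ((2 : R) *: y - (3 : R) *: x)) => [h|[h|h]].
  + left; case: (trich leT (y - 3%:~R *: x)) => [h'|[h'|h']].
    * exists (y - 3%:~R *: x); split => //; first by left; rewrite Hrx k3.
      rewrite /ltv (_ : y - (y - 3%:~R *: x) = 3%:~R *: x); last by vring.
      by apply: (pos_scale leT) => //; rewrite ltr0z.
    * by rewrite h' eqxx in hx.
    * exists (- (y - 3%:~R *: x)); split => //; first by right; rewrite Hrx k3.
      by rewrite /ltv (_ : y - - (y - 3%:~R *: x) = (2 : R) *: y - (3 : R) *: x); last by vring.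
  + by move: ny; rewrite -subr_eq0 h eqxx.
  + right; exists (- (x - 1%:~R *: y)); split.
    * by rewrite (_ : - (x - 1%:~R *: y) = y - x); last by vring.
    * by right; rewrite Hry l1.
    * rewrite /ltv (_ : x - - (x - 1%:~R *: y) = (1/2 : R) *: (- ((2 : R) *: y - (3 : R) *: x)) + (1/2 : R) *: x); last by vfield.
      by apply: (pos_add leT); apply: (pos_scale leT) => //; lra.
Qed.

Lemma core x y : RS x -> RS y -> pos x -> pos y -> x != y -> 0 < ip x y ->
  (exists z, [/\ pos z, z = rf x *m y \/ z = - (rf x *m y) & ltv z y]) \/
  (exists z, [/\ pos z, z = rf y *m x \/ z = - (rf y *m x) & ltv z x]).
Proof.
move=> Hx Hy px py xy ipp.
case: (ltv_total leT (x := x) (y := y)) => [|h|h]; first by apply/eqP.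
  exact: core_ord.
by rewrite ip_sym in ipp; case: (core_ord Hy Hx py px h ipp) => H; [right|left].
Qed.
Definition pw (ws : seq vec) : mx := foldr (fun x M => rf x *m M) 1%:M ws.

Lemma pw_cons x ws : pw (x :: ws) = rf x *m pw ws.
Proof. by []. Qed.

Lemma pw_cat ws1 ws2 : pw (ws1 ++ ws2) = pw ws1 *m pw ws2.
Proof.
elim: ws1 => [|x ws IH] /=; first by rewrite mul1mx.
by rewrite IH mulmxA.
Qed.

Lemma pw_rcons ws x : pw (rcons ws x) = pw ws *m rf x.
Proof. by rewrite -cats1 pw_cat /= mulmx1. Qed.

Lemma pw_rev ws : (forall x, x \in ws -> RS x) -> pw ws *m pw (rev ws) = 1%:M.
Proof.
elim: ws => [|x ws IH] H /=; first by rewrite mulmx1.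
rewrite rev_cons pw_rcons mulmxA -(mulmxA (rf x)) IH; last first.
  by move=> y ys; apply: H; rewrite in_cons ys orbT.
by rewrite mulmx1 rf_invol //; apply: H; rewrite mem_head.
Qed.

Lemma pw_Rp ws v : (forall x, x \in ws -> Rp x) -> Rp v -> Rp (pw ws *m v).
Proof.
elim: ws => [|x ws IH] H Hv /=; first by rewrite mul1mx.
rewrite -mulmxA; apply: Rp_rf; first by apply: H; rewrite mem_head.
by apply: IH => // y ys; apply: H; rewrite in_cons ys orbT.
Qed.

Lemma rf_inj a b : RS a -> RS b -> pos a -> pos b -> rf a = rf b -> a = b.
Proof.
move=> Ha Hb pa pb E.
have : rf b *m a = - a by rewrite -E rf_neg.
rewrite rf_vec => E2.
have aE : a = (pair (cr b) a / 2) *: b.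
  apply/matrixP => i j; move/matrixP: E2 => /(_ i j); rewrite !mxE => h.
  rewrite mulrAC; set kb := _ * b i j in h *; lra.
case: (RSred Hb (eq_ind _ RS Ha _ aE)) => t.
  by rewrite aE t scale1r.
by exfalso; move: pa; rewrite aE t scaleN1r; exact: (pos_opp leT).
Qed.

Definition Inv (g : seq vec) := [/\ uniq g, forall x, x \in g -> Rp x /\ pos x &
  forall v, Rp v -> exists ws a, [/\ forall x, x \in ws -> x \in g, a \in g & v = pw ws *m a]].

Definition pl : seq vec := [seq v <- rl | `[< pos v >]].
Definition rank (y : vec) : nat := count (fun d => `[< ltv d y >]) pl.
Definition mu (g : seq vec) : nat := \sum_(y <- g) 2 ^ rank y.

Lemma count_lt_sub (P Q : pred vec) (s : seq vec) : (forall d, P d -> Q d) ->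
  (exists d, [/\ d \in s, Q d & ~~ P d]) -> (count P s < count Q s)%N.
Proof.
move=> PQ; elim: s => [|d s IH] [e [es Qe Pe]] //=.
move: es; rewrite in_cons => /orP [/eqP de|es].
  rewrite -de (negbTE Pe) Qe add0n add1n ltnS; exact: sub_count.
apply: (@leq_trans (P d + count Q s)%N).
  by rewrite ltn_add2l; apply: IH; exists e.
rewrite leq_add2r; case: (P d) (PQ d) => //= -> //.
Qed.

Lemma rank_lt z y : Rp z -> pos z -> ltv z y -> (rank z < rank y)%N.
Proof.
move=> Hz pz zy; apply: count_lt_sub.
  move=> d /asboolP dz; apply/asboolP; exact: (ltv_trans leT dz zy).
exists z; split; first by rewrite mem_filter; apply/andP; split; [apply/asboolP | apply/rlP].
  by apply/asboolP.
by apply/asboolP; apply: ltv_irr.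
Qed.

Lemma step_eqi (A A' B : seq mx) : A =i A' -> nielsen_step A' B -> nielsen_step A B.
Proof.
move=> E [ti [tj [i1 i2 i3 H]]]; exists ti, tj; split; rewrite ?E //.
by move=> x; rewrite E; apply: H.
Qed.
Definition gnew (g : seq vec) (y z : vec) : seq vec :=
  if z \in g then rem y g else rcons (rem y g) z.

Lemma gnewP g y z : uniq g -> z != y -> forall t, t \in gnew g y z = ((t \in g) && (t != y)) || (t == z).
Proof.
move=> ug zy t; rewrite /gnew.
case: ifP => zg.
  rewrite mem_rem_uniq // inE andbC.
  by case: (eqVneq t z) => [->|tz]; rewrite ?zg ?zy ?orbT ?orbF.
by rewrite mem_rcons in_cons mem_rem_uniq // inE orbC andbC.
Qed.

Lemma mu_rem g y : y \in g -> mu g = (2 ^ rank y + mu (rem y g))%N.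
Proof. by move=> yg; rewrite /mu (perm_big _ (perm_to_rem yg)) big_cons. Qed.

Lemma mu_gnew g y z : uniq g -> y \in g -> (rank z < rank y)%N -> (mu (gnew g y z) < mu g)%N.
Proof.
move=> ug yg rzy; rewrite (mu_rem yg) /gnew.
have h : (2 ^ rank z < 2 ^ rank y)%N by rewrite ltn_exp2l.
case: ifP => _.
  by rewrite addnC -ltn_subLR ?subnn ?expn_gt0.
by rewrite /mu -cats1 big_cat big_seq1 /= addnC ltn_add2r.
Qed.

Lemma rep g x y z : Inv g -> x \in g -> y \in g -> x != y -> pos z ->
  (z = rf x *m y \/ z = - (rf x *m y)) -> ltv z y ->
  [/\ Inv (gnew g y z), nielsen_step (map rf g) (map rf (gnew g y z))
    & (mu (gnew g y z) < mu g)%N].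
Proof.
move=> [ug Hg Hgen] xg yg xy pz zE zy.
have [Rx px] := Hg x xg; have [Ry py] := Hg y yg.
have RSx := Rp_RS Rx; have RSy := Rp_RS Ry.
have Rz : Rp z by case: zE => ->; [exact: Rp_rf | apply: Rp_opp; exact: Rp_rf].
have RSz := Rp_RS Rz.
have zny : z != y by apply/eqP => E; move: zy; rewrite E; apply: ltv_irr.
have rfz : rf z = rf x *m rf y *m invmx (rf x).
  have -> : rf z = rf (rf x *m y) by case: zE => ->; rewrite ?rf_opp.
  by rewrite conj_rf //; exact: good_rf.
have rfy : rf y = rf x *m rf z *m rf x.
  rewrite rfz invmx_rf // !mulmxA rf_invol // mul1mx -mulmxA rf_invol //.
  by rewrite mulmx1.
have mg := gnewP ug zny.
have xg' : x \in gnew g y z by rewrite mg xg xy.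
have zg' : z \in gnew g y z by rewrite mg eqxx orbT.
split.
- split.
  + rewrite /gnew; case: ifP => zg; first exact: rem_uniq.
    by rewrite rcons_uniq rem_uniq // andbT mem_rem_uniq // inE zg andbF.
  + move=> t; rewrite mg => /orP [/andP [tg _]|/eqP ->]; [exact: Hg | by split].
  + move=> v Hv; case: (Hgen v Hv) => ws [a [Hws ag ->]].
    set tr := fun w => if w == y then [:: x; z; x] else [:: w].
    have trP : forall ws', (forall t, t \in ws' -> t \in g) ->
        pw (flatten (map tr ws')) = pw ws' /\ (forall t, t \in flatten (map tr ws') -> t \in gnew g y z).
      elim => [|w ws' IH] H /=; first by split.
      have [IH1 IH2] : pw (flatten (map tr ws')) = pw ws' /\ (forall t, t \in flatten (map tr ws') -> t \in gnew g y z).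
        by apply: IH => t ts; apply: H; rewrite in_cons ts orbT.
      have wg : w \in g by apply: H; rewrite mem_head.
      case: (eqVneq w y) => [wy|wy].
        have trw : tr w = [:: x; z; x] by rewrite /tr wy eqxx.
        rewrite trw; split.
        - by rewrite /= -IH1 wy rfy !mulmxA.
        - move=> t; rewrite /= !in_cons => /orP [/eqP ->//|/orP [/eqP ->//|/orP [/eqP ->//|]]].
          exact: IH2.
      have trw : tr w = [:: w] by rewrite /tr (negbTE wy).
      rewrite trw; split.
      - by rewrite /= IH1.
      - move=> t; rewrite /= in_cons => /orP [/eqP ->|]; last exact: IH2.
        by rewrite mg wg /= wy.
    have [E1 E2] := trP ws Hws.
    case: (eqVneq a y) => [ay|ayn].
    * case: zE => zE.
      - exists (flatten (map tr ws) ++ [:: x]), z; split => //.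
          by move=> t; rewrite mem_cat => /orP [/E2|]; rewrite // inE => /eqP ->.
        by rewrite pw_cat E1 /= mulmx1 zE -!mulmxA (mulmxA (rf x)) rf_invol // mul1mx ay.
      - exists (flatten (map tr ws) ++ [:: x; z]), z; split => //.
          by move=> t; rewrite mem_cat => /orP [/E2|]; rewrite // !inE => /orP [] /eqP ->.
        rewrite pw_cat E1 /= mulmx1 -!mulmxA rf_neg // zE.
        by rewrite opprK (mulmxA (rf x)) rf_invol // mul1mx ay.
    * exists (flatten (map tr ws)), a; split => //.
        by rewrite mg ag ayn.
      by rewrite E1.
- exists (rf x), (rf y); split.
  + exact: map_f.
  + exact: map_f.
  + by apply/eqP => E; move: xy; rewrite (rf_inj RSx RSy px py E) eqxx.
  + move=> t; split.
      move=> /mapP [w]; rewrite mg => /orP [/andP [wg wy]|/eqP ->] ->; last by right.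
      left; split; first exact: map_f.
      apply/eqP => E; have [Rw pw'] := Hg w wg.
      by move: wy; rewrite (rf_inj (Rp_RS Rw) RSy pw' py E) eqxx.
    move=> [[/mapP [w wg ->] wy]|->]; last by rewrite -rfz; exact: map_f.
    apply: map_f; rewrite mg wg /=; apply/orP; left; apply/eqP => E.
    by move: wy; rewrite E eqxx.
- apply: mu_gnew => //; exact: rank_lt.
Qed.
Definition obtuse (g : seq vec) := forall x y, x \in g -> y \in g -> x != y -> ip x y <= 0.

Lemma nielsen_loop N : forall g, (mu g < N)%N -> Inv g -> forall A : seq mx, A =i map rf g ->
  exists B g', [/\ nielsen_reach A B, B =i map rf g', Inv g' & obtuse g'].
Proof.
elim: N => [//|N IH] g mN Ig A EA.
case: (pselect (exists x y, [/\ x \in g, y \in g, x != y & 0 < ip x y])); last first.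
  move=> H; exists A, g; split => //; first exact: rt_refl.
  move=> x y xg yg xy; rewrite leNgt; apply/negP => h; apply: H.
  by exists x, y.
move=> [x [y [xg yg xy ipp]]].
have [Rx px] := (match Ig with And3 _ H _ => H end) x xg.
have [Ry py] := (match Ig with And3 _ H _ => H end) y yg.
case: (core (Rp_RS Rx) (Rp_RS Ry) px py xy ipp) => [[z [pz zE zlt]]|[z [pz zE zlt]]].
- have [I' S' M'] := rep Ig xg yg xy pz zE zlt.
  have [B [g' [r1 r2 r3 r4]]] := IH _ (leq_trans M' (mN : (mu g < N.+1)%N)) I' _ (fun t => erefl).
  exists B, g'; split => //.
  apply: rt_trans r1; apply: rt_step; exact: step_eqi S'.
- have yx : y != x by rewrite eq_sym.
  have [I' S' M'] := rep Ig yg xg yx pz zE zlt.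
  have [B [g' [r1 r2 r3 r4]]] := IH _ (leq_trans M' (mN : (mu g < N.+1)%N)) I' _ (fun t => erefl).
  exists B, g'; split => //.
  apply: rt_trans r1; apply: rt_step; exact: step_eqi S'.
Qed.
Definition isw (L : seq vec) (ws : seq vec) : bool := all (fun t => t \in L) ws.
Definition Wd (L : seq vec) (M : mx) : Prop := exists ws, isw L ws /\ pw ws = M.

Definition lenP (L : seq vec) (M : mx) (k : nat) : bool :=
  `[< exists ws, [/\ isw L ws, pw ws = M & size ws = k] >] || ((k == 0%N) && ~~ `[< Wd L M >]).

Lemma lenP_ex L M : exists k, lenP L M k.
Proof.
case: (pselect (Wd L M)) => [[ws [H1 H2]]|H].
  by exists (size ws); apply/orP; left; apply/asboolP; exists ws.
by exists 0%N; apply/orP; right; rewrite eqxx /=; apply/asboolPn.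
Qed.

Definition lenw (L : seq vec) (M : mx) : nat := ex_minn (lenP_ex L M).

Lemma lenw_word L M : Wd L M -> exists ws, [/\ isw L ws, pw ws = M & size ws = lenw L M].
Proof.
move=> HW; rewrite /lenw; case: ex_minnP => k /orP [/asboolP //|/andP [_ /asboolPn]] //.
Qed.

Lemma lenw_min L M ws : isw L ws -> pw ws = M -> (lenw L M <= size ws)%N.
Proof.
move=> H1 H2; rewrite /lenw; case: ex_minnP => k _ Hmin; apply: Hmin.
by apply/orP; left; apply/asboolP; exists ws.
Qed.

Lemma isw_cat L ws1 ws2 : isw L (ws1 ++ ws2) = isw L ws1 && isw L ws2.
Proof. exact: all_cat. Qed.

Lemma isw_sub L L' ws : {subset L <= L'} -> isw L ws -> isw L' ws.
Proof. by move=> sub /allP H; apply/allP => t /H; apply: sub. Qed.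

Lemma Wd_mul L v u : Wd L v -> Wd L u -> Wd L (v *m u).
Proof.
move=> [ws1 [H1 <-]] [ws2 [H2 <-]]; exists (ws1 ++ ws2); split.
  by rewrite isw_cat H1 H2.
by rewrite pw_cat.
Qed.

Lemma Wd_rf L a : a \in L -> Wd L (rf a).
Proof. by move=> aL; exists [:: a]; split; [rewrite /isw /= aL | rewrite /= mulmx1]. Qed.

Lemma Wd_sub L L' M : {subset L <= L'} -> Wd L M -> Wd L' M.
Proof. by move=> sub [ws [H1 H2]]; exists ws; split => //; exact: isw_sub H1. Qed.

Lemma lenw_mul L L' v u : {subset L' <= L} -> Wd L v -> Wd L' u ->
  (lenw L (v *m u) <= lenw L v + lenw L' u)%N.
Proof.
move=> sub Hv Hu.
case: (lenw_word Hv) => ws1 [H1 E1 S1]; case: (lenw_word Hu) => ws2 [H2 E2 S2].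
rewrite -S1 -S2 -size_cat; apply: lenw_min; last by rewrite pw_cat E1 E2.
by rewrite isw_cat H1 (isw_sub sub H2).
Qed.

Lemma lenw_mulr L v a : a \in L -> Wd L v -> (lenw L (v *m rf a) <= (lenw L v).+1)%N.
Proof.
move=> aL Hv; rewrite -addn1.
have := @lenw_mul L [:: a] v (rf a) _ Hv (Wd_rf (mem_head a [::])).
move=> H; apply: leq_trans (H _) _; first by move=> t; rewrite inE => /eqP ->.
rewrite leq_add2l; apply: (@lenw_min _ _ [:: a]); [by rewrite /isw /= mem_head | by rewrite /= mulmx1].
Qed.

Lemma lenw_mull L u a : a \in L -> Wd L u -> (lenw L (rf a *m u) <= (lenw L u).+1)%N.
Proof.
move=> aL Hu; case: (lenw_word Hu) => ws [H1 E1 S1].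
rewrite -S1; apply: (@lenw_min _ _ (a :: ws)) => //=.
  by rewrite aL.
by rewrite E1.
Qed.

Lemma lenw0 L M : Wd L M -> lenw L M = 0%N -> M = 1%:M.
Proof.
move=> HM H0; case: (lenw_word HM) => ws [_ E S]; move: S; rewrite H0 => /size0nil ws0.
by rewrite -E ws0.
Qed.

Definition incone (g : seq vec) (v : vec) := exists f : vec -> R,
  (forall t, t \in g -> 0 <= f t) /\ v = \sum_(t <- g) f t *: t.

Lemma incone_mem g a : uniq g -> a \in g -> incone g a.
Proof.
move=> ug ag; exists (fun t => if t == a then 1 else 0); split.
  by move=> t _; case: eqP.
rewrite (perm_big _ (perm_to_rem ag)) big_cons eqxx scale1r big1_seq; first exact: (esym (addr0 a)).
move=> t /andP [_]; rewrite mem_rem_uniq // inE => /andP [/negbTE -> _].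
by rewrite scale0r.
Qed.

Lemma incone_comb g v1 v2 p q : 0 <= p -> 0 <= q -> incone g v1 -> incone g v2 ->
  incone g (p *: v1 + q *: v2).
Proof.
move=> pp qp [f1 [F1 ->]] [f2 [F2 ->]].
exists (fun t => p * f1 t + q * f2 t); split.
  move=> t tg; apply: addr_ge0; apply: mulr_ge0 => //.
    exact: F1.
  exact: F2.
rewrite !scaler_sumr -big_split; apply: eq_bigr => t _ /=.
by rewrite scalerDl !scalerA.
Qed.

Fixpoint altw (x y : vec) (j : nat) : seq vec :=
  if j is j'.+1 then rcons (altw y x j') x else [::].

Lemma size_altw x y j : size (altw x y j) = j.
Proof. by elim: j x y => [|j IH] x y //=; rewrite size_rcons IH. Qed.

Lemma altw_letters x y j t : t \in altw x y j -> t = x \/ t = y.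
Proof.
elim: j x y => [|j IH] x y //=; rewrite mem_rcons in_cons => /orP [/eqP ->|/IH [] ->].
- by left.
- by right.
- by left.
Qed.

Lemma altw_split x y i j :
  altw x y (i + j) = altw (if odd j then y else x) (if odd j then x else y) i ++ altw x y j.
Proof.
elim: j x y => [|j IH] x y; first by rewrite addn0 cats0.
rewrite addnS /= IH -rcons_cat; case: (odd j) => //.
Qed.

Lemma alt_char x y us : x != y -> (forall t, t \in us -> t = x \/ t = y) ->
  (forall p q t, us <> p ++ t :: t :: q) ->
  (forall us', us <> rcons us' y) -> us = altw x y (size us).
Proof.
elim/last_ind: us x y => [//|us e IH] x y xy Hl Hnad Hlast.
have ex : e = x.
  case: (Hl e); rewrite ?mem_rcons ?mem_head // => ey.
  by exfalso; apply: (Hlast us); rewrite ey.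
rewrite ex size_rcons /=; congr rcons; apply: IH.
- by rewrite eq_sym.
- by move=> t tu; case: (Hl t); rewrite ?mem_rcons ?in_cons ?tu ?orbT //; [right | left].
- move=> p q t E; apply: (Hnad p (rcons q e) t).
  by rewrite E rcons_cat.
- move=> us' E; apply: (Hnad us' [::] x).
  by rewrite E ex -!cats1 -catA.
Qed.

Definition act (k l : R) (isa : bool) (pq : R * R) : R * R :=
  if isa then (- pq.1 - k * pq.2, pq.2) else (pq.1, - l * pq.1 - pq.2).

Definition Fc (a : vec) (k l : R) (ws : seq vec) (pq : R * R) : R * R :=
  foldr (fun x pq => act k l (x == a) pq) pq ws.

Lemma pw_coord a b ws p q : RS a -> RS b -> a != b ->
  (forall t, t \in ws -> t = a \/ t = b) ->
  pw ws *m (p *: a + q *: b) =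
  (Fc a (pair (cr a) b) (pair (cr b) a) ws (p, q)).1 *: a +
  (Fc a (pair (cr a) b) (pair (cr b) a) ws (p, q)).2 *: b.
Proof.
move=> Ha Hb ab; elim: ws => [|x ws IH] Hl /=; first by rewrite mul1mx.
rewrite -mulmxA IH; last by move=> t tw; apply: Hl; rewrite in_cons tw orbT.
set p' := (Fc _ _ _ ws _).1; set q' := (Fc _ _ _ ws _).2.
case: (Hl x (mem_head _ _)) => ->.
- rewrite eqxx /act /= rf_vec pair_add !pair_scale pair_cr_self //.
  vring.
- rewrite eq_sym (negbTE ab) /act /= rf_vec pair_add !pair_scale pair_cr_self //.
  vring.
Qed.

Lemma decomp a b x : RS a -> RS b -> 4 - pair (cr a) b * pair (cr b) a != 0 ->
  exists p q x0, [/\ x = p *: a + q *: b + x0, pair (cr a) x0 = 0 & pair (cr b) x0 = 0].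
Proof.
move=> Ha Hb D.
set k := pair (cr a) b; set l := pair (cr b) a.
set A := pair (cr a) x; set B := pair (cr b) x.
set p := (2 * A - k * B) / (4 - k * l); set q := (2 * B - l * A) / (4 - k * l).
exists p, q, (x - (p *: a + q *: b)); split.
- by rewrite addrC subrK.
- rewrite pair_sub pair_add !pair_scale pair_cr_self // -/k -/A /p /q.
  by field.
- rewrite pair_sub pair_add !pair_scale pair_cr_self // -/l -/B /p /q.
  by field.
Qed.

Lemma pw_fix a b ws x0 : (forall t, t \in ws -> t = a \/ t = b) ->
  pair (cr a) x0 = 0 -> pair (cr b) x0 = 0 -> pw ws *m x0 = x0.
Proof.
move=> Hl h1 h2; elim: ws Hl => [|x ws IH] Hl /=; first by rewrite mul1mx.
rewrite -mulmxA IH; last by move=> t tw; apply: Hl; rewrite in_cons tw orbT.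
by case: (Hl x (mem_head _ _)) => ->; rewrite rf_vec ?h1 ?h2 scale0r subr0.
Qed.

Lemma braid a b ws1 ws2 : RS a -> RS b -> a != b ->
  4 - pair (cr a) b * pair (cr b) a != 0 ->
  (forall t, t \in ws1 -> t = a \/ t = b) -> (forall t, t \in ws2 -> t = a \/ t = b) ->
  Fc a (pair (cr a) b) (pair (cr b) a) ws1 (1, 0) = Fc a (pair (cr a) b) (pair (cr b) a) ws2 (1, 0) ->
  Fc a (pair (cr a) b) (pair (cr b) a) ws1 (0, 1) = Fc a (pair (cr a) b) (pair (cr b) a) ws2 (0, 1) ->
  pw ws1 = pw ws2.
Proof.
move=> Ha Hb ab D H1 H2 E1 E2; apply: mx_ext => x.
case: (decomp x Ha Hb D) => p [q [x0 [-> h1 h2]]].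
have -> : p *: a + q *: b = p *: (1 *: a + 0 *: b) + q *: (0 *: a + 1 *: b).
  by vring.
rewrite !mulmxDr (pw_fix H1 h1 h2) (pw_fix H2 h1 h2); congr (_ + _).
by rewrite -!scalemxAr !pw_coord // E1 E2.
Qed.
Lemma isw2 a b ws : isw [:: a; b] ws -> forall t, t \in ws -> t = a \/ t = b.
Proof.
move=> /allP H t /H; rewrite !inE => /orP [] /eqP ->; by [left | right].
Qed.

Lemma isw2_alt a b x y j : (x = a \/ x = b) -> (y = a \/ y = b) -> isw [:: a; b] (altw x y j).
Proof.
move=> hx hy; apply/allP => t /altw_letters [] ->; rewrite !inE.
  by case: hx => ->; rewrite eqxx ?orbT.
by case: hy => ->; rewrite eqxx ?orbT.
Qed.

Lemma dihedral_gen a b m u : RS a -> RS b -> a != b -> (0 < m)%N ->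
  4 - pair (cr a) b * pair (cr b) a != 0 ->
  Fc a (pair (cr a) b) (pair (cr b) a) (altw b a m) (1, 0) = Fc a (pair (cr a) b) (pair (cr b) a) (altw a b m) (1, 0) ->
  Fc a (pair (cr a) b) (pair (cr b) a) (altw b a m) (0, 1) = Fc a (pair (cr a) b) (pair (cr b) a) (altw a b m) (0, 1) ->
  (forall j, (j < m)%N -> 0 <= (Fc a (pair (cr a) b) (pair (cr b) a) (altw b a j) (1, 0)).1 /\
                         0 <= (Fc a (pair (cr a) b) (pair (cr b) a) (altw b a j) (1, 0)).2) ->
  Wd [:: a; b] u -> (lenw [:: a; b] u <= lenw [:: a; b] (u *m rf a))%N ->
  exists p q, [/\ 0 <= p, 0 <= q & u *m a = p *: a + q *: b].
Proof.
move=> Ha Hb ab m0 D B1 B2 Hpos Hu Hlen.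
case: (lenw_word Hu) => us [Hus Eu Su].
have hl := isw2 Hus.
have hl' : forall t, t \in us -> t = b \/ t = a by move=> t /hl [] ->; [right | left].
have RSl : forall t, t \in us -> RS t by move=> t /hl [] ->.
have nad : forall p q t, us <> p ++ t :: t :: q.
  move=> p q t E.
  have Rt : RS t by apply: RSl; rewrite E mem_cat mem_head orbT.
  have : (lenw [:: a; b] u <= size (p ++ q))%N.
    apply: lenw_min.
      apply/allP => s hs; apply: (allP Hus); move: hs; rewrite E !mem_cat !in_cons.
      by case/orP => ->; rewrite ?orbT.
    by rewrite -Eu E !pw_cat /= (mulmxA (rf t)) rf_invol // mul1mx.
  rewrite -Su E !size_cat /= !addnS => h.
  by have := leq_trans h (leqnSn _); rewrite ltnn.
have nlast : forall us', us <> rcons us' a.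
  move=> us' E.
  have : (lenw [:: a; b] (u *m rf a) <= size us')%N.
    apply: lenw_min.
      by apply/allP => s hs; apply: (allP Hus); rewrite E mem_rcons in_cons hs orbT.
    by rewrite -Eu E pw_rcons -mulmxA rf_invol // mulmx1.
  move=> h; have := leq_trans Hlen h; rewrite -Su E size_rcons.
  by rewrite ltnn.
have usE : us = altw b a (size us).
  have ba : b != a by rewrite eq_sym.
  exact: (alt_char ba hl' nad nlast).
have jm : (size us < m)%N.
  rewrite ltnNge; apply/negP => mj.
  have [i iE] : exists i, (i + m = size us)%N by exists (size us - m)%N; rewrite subnK.
  have E2 : pw us = pw (altw (if odd m then a else b) (if odd m then b else a) i) *m pw (altw a b m).
    rewrite usE -iE altw_split pw_cat; congr (_ *m _).
    apply: (braid Ha Hb ab D _ _ B1 B2); move=> t /altw_letters [] ->; by [left | right].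
  clear usE; case: m m0 B1 B2 Hpos mj iE E2 => [//|m'] _ _ _ _ _ iE E2.
  set W := altw (if odd m'.+1 then a else b) (if odd m'.+1 then b else a) i ++ altw b a m'.
  have h : (lenw [:: a; b] (u *m rf a) <= size W)%N.
    apply: lenw_min.
      rewrite isw_cat; apply/andP; split; apply: isw2_alt; case: (odd _); by [left | right].
    rewrite -Eu E2 /= pw_rcons -!mulmxA rf_invol // mulmx1.
    by rewrite /W pw_cat.
  move: h; rewrite /W size_cat !size_altw => h.
  by have := leq_trans Hlen h; rewrite -Su -iE addnS ltnn.
have [F1 F2] := Hpos _ jm; rewrite -usE in F1 F2.
exists (Fc a (pair (cr a) b) (pair (cr b) a) us (1, 0)).1.
exists (Fc a (pair (cr a) b) (pair (cr b) a) us (1, 0)).2; split => //.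
have := @pw_coord a b us 1 0 Ha Hb ab hl.
by rewrite scale1r scale0r addr0 Eu.
Qed.
Lemma dihedral a b u : Rp a -> Rp b -> pos a -> pos b -> a != b -> ip a b <= 0 ->
  Wd [:: a; b] u -> (lenw [:: a; b] u <= lenw [:: a; b] (u *m rf a))%N ->
  exists p q, [/\ 0 <= p, 0 <= q & u *m a = p *: a + q *: b].
Proof.
move=> Ra Rb pa pb ab ipn Hu Hlen.
have Ha := Rp_RS Ra; have Hb := Rp_RS Rb.
have ba : b != a by rewrite eq_sym.
have bna := pos_neq_opp pa pb.
case: (cartan Ha Hb ba bna) => k [l [Ek El kl s1 s2]].
have kn : ~~ (0 < k)%R.
  by rewrite -(ltr0z R) -Ek (proj1 (pair_cr_sign b Ha)) -leNgt.
have ln : ~~ (0 < l)%R by rewrite -s1.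
have [[k0 l0]|[[k0 l0]|[[k0 l0]|[[k0 l0]|[[k0 l0]|[k0 l0]]]]]] :
  (k = 0 /\ l = 0) \/ (k = -1 /\ l = -1) \/ (k = -1 /\ l = -2) \/ (k = -2 /\ l = -1) \/
  (k = -1 /\ l = -3) \/ (k = -3 /\ l = -1).
  by move: kn ln s2 kl; rewrite -!leNgt => kn ln s2 kl; move: s2; case: ltrP; case: ltrP => //; nia.
- rewrite k0 in Ek; rewrite l0 in El.
  apply: (@dihedral_gen a b 2) => //; rewrite Ek El /=.
  + by apply/eqP => h; lra.
  + by rewrite !eqxx (negbTE ba) /act /=; congr (_, _); ring.
  + by rewrite !eqxx (negbTE ba) /act /=; congr (_, _); ring.
  + by case=> [|[|j]] //= _; rewrite ?eqxx ?(negbTE ba) /act /=; split; lra.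
- rewrite k0 in Ek; rewrite l0 in El.
  apply: (@dihedral_gen a b 3) => //; rewrite Ek El /=.
  + by apply/eqP => h; lra.
  + by rewrite !eqxx (negbTE ba) /act /=; congr (_, _); ring.
  + by rewrite !eqxx (negbTE ba) /act /=; congr (_, _); ring.
  + by case=> [|[|[|j]]] //= _; rewrite ?eqxx ?(negbTE ba) /act /=; split; lra.
- rewrite k0 in Ek; rewrite l0 in El.
  apply: (@dihedral_gen a b 4) => //; rewrite Ek El /=.
  + by apply/eqP => h; lra.
  + by rewrite !eqxx (negbTE ba) /act /=; congr (_, _); ring.
  + by rewrite !eqxx (negbTE ba) /act /=; congr (_, _); ring.
  + by case=> [|[|[|[|j]]]] //= _; rewrite ?eqxx ?(negbTE ba) /act /=; split; lra.
- rewrite k0 in Ek; rewrite l0 in El.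
  apply: (@dihedral_gen a b 4) => //; rewrite Ek El /=.
  + by apply/eqP => h; lra.
  + by rewrite !eqxx (negbTE ba) /act /=; congr (_, _); ring.
  + by rewrite !eqxx (negbTE ba) /act /=; congr (_, _); ring.
  + by case=> [|[|[|[|j]]]] //= _; rewrite ?eqxx ?(negbTE ba) /act /=; split; lra.
- rewrite k0 in Ek; rewrite l0 in El.
  apply: (@dihedral_gen a b 6) => //; rewrite Ek El /=.
  + by apply/eqP => h; lra.
  + by rewrite !eqxx (negbTE ba) /act /=; congr (_, _); ring.
  + by rewrite !eqxx (negbTE ba) /act /=; congr (_, _); ring.
  + by case=> [|[|[|[|[|[|j]]]]]] //= _; rewrite ?eqxx ?(negbTE ba) /act /=; split; lra.
- rewrite k0 in Ek; rewrite l0 in El.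
  apply: (@dihedral_gen a b 6) => //; rewrite Ek El /=.
  + by apply/eqP => h; lra.
  + by rewrite !eqxx (negbTE ba) /act /=; congr (_, _); ring.
  + by rewrite !eqxx (negbTE ba) /act /=; congr (_, _); ring.
  + by case=> [|[|[|[|[|[|j]]]]]] //= _; rewrite ?eqxx ?(negbTE ba) /act /=; split; lra.
Qed.
Lemma HT g : uniq g -> (forall x, x \in g -> Rp x /\ pos x) -> obtuse g ->
  forall N w, (lenw g w < N)%N -> Wd g w -> forall a, a \in g ->
  (lenw g w <= lenw g (w *m rf a))%N -> incone g (w *m a).
Proof.
move=> ug Hg ob; elim => [//|N IH] w wN Hw a ag Hlen.
case Elw: (lenw g w) => [|m].
  by rewrite (lenw0 Hw Elw) mul1mx; exact: incone_mem.
case: (lenw_word Hw) => ws [Hws Ew Sw].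
case/lastP: ws Hws Ew Sw => [|ws' b] Hws Ew Sw; first by rewrite Elw in Sw.
have bg : b \in g by apply: (allP Hws); rewrite mem_rcons mem_head.
have Hws' : isw g ws' by apply/allP => t tw; apply: (allP Hws); rewrite mem_rcons in_cons tw orbT.
have [Ra pa] := Hg a ag; have [Rb pb] := Hg b bg.
have RSa := Rp_RS Ra; have RSb := Rp_RS Rb.
have Sws' : size ws' = m by move: Sw; rewrite size_rcons Elw => -[].
have wb : w *m rf b = pw ws' by rewrite -Ew pw_rcons -mulmxA rf_invol // mulmx1.
have ab : a != b.
  apply/eqP => E; move: Hlen; rewrite E wb Elw => h.
  by have := leq_trans h (lenw_min Hws' (erefl _)); rewrite Sws' ltnn.
set L2 := [:: a; b].
have sub : {subset L2 <= g} by move=> t; rewrite !inE => /orP [] /eqP ->.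
have aL : a \in L2 by rewrite mem_head.
have bL : b \in L2 by rewrite !inE eqxx orbT.
pose Aset v := [/\ Wd g v & exists u, [/\ Wd L2 u, w = v *m u & (lenw g v + lenw L2 u = lenw g w)%N]].
have A0 : Aset (pw ws').
  split; first by exists ws'.
  exists (rf b); split; first exact: Wd_rf.
    by rewrite -Ew pw_rcons.
  apply/eqP; rewrite eqn_leq; apply/andP; split.
    rewrite Elw -Sws' -addn1; apply: leq_add; first exact: lenw_min.
    by apply: (@lenw_min _ _ [:: b]); rewrite /= ?mulmx1 // /isw /= bL.
  rewrite {1}(_ : w = pw ws' *m rf b); last by rewrite -Ew pw_rcons.
  by apply: lenw_mul => //; [exists ws' | exact: Wd_rf].
have Pex : exists k, `[< exists v, Aset v /\ lenw g v = k >].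
  by exists (lenw g (pw ws')); apply/asboolP; exists (pw ws').
case: (ex_minnP Pex) => k0 /asboolP [v [[Hv [u [Hu wE sE]]] vk]] kmin.
have vmin : forall v', Aset v' -> (lenw g v <= lenw g v')%N.
  by move=> v' Av'; rewrite vk; apply: kmin; apply/asboolP; exists v'.
have vlt : (lenw g v < lenw g w)%N.
  apply: leq_ltn_trans (vmin _ A0) _; rewrite Elw ltnS -Sws'.
  exact: lenw_min.
have claim1 : forall c, c \in L2 -> (lenw g v <= lenw g (v *m rf c))%N.
  move=> c cL; rewrite leqNgt; apply/negP => h.
  have cg := sub c cL; have [Rc _] := Hg c cg; have RSc := Rp_RS Rc.
  have Av' : Aset (v *m rf c).
    split; first by apply: Wd_mul => //; exact: Wd_rf.
    exists (rf c *m u); split.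
    - by apply: Wd_mul => //; exact: Wd_rf.
    - by rewrite wE -mulmxA (mulmxA (rf c)) rf_invol // mul1mx.
    - apply/eqP; rewrite eqn_leq; apply/andP; split; last first.
        have -> : w = v *m rf c *m (rf c *m u) by rewrite wE -mulmxA (mulmxA (rf c)) rf_invol // mul1mx.
        apply: lenw_mul => //; apply: Wd_mul => //; exact: Wd_rf.
      rewrite -sE; apply: leq_trans (_ : (lenw g (v *m rf c) + (lenw L2 u).+1 <= _)%N).
        by rewrite leq_add2l; apply: lenw_mull.
      by rewrite addnS -addSn leq_add2r.
  by have := vmin _ Av'; rewrite leqNgt h.
have Rvlt : (lenw g v < N)%N by apply: leq_trans vlt _; rewrite -ltnS.
have IHa := IH v Rvlt Hv a ag (claim1 a aL).
have IHb := IH v Rvlt Hv b bg (claim1 b bL).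
have claim3 : (lenw L2 u <= lenw L2 (u *m rf a))%N.
  rewrite leqNgt; apply/negP => h.
  have : (lenw g (w *m rf a) < lenw g w)%N.
    have E1 : w *m rf a = v *m (u *m rf a) by rewrite wE mulmxA.
    rewrite E1 -sE; apply: leq_ltn_trans (lenw_mul sub Hv (Wd_mul Hu (Wd_rf aL))) _.
    by rewrite ltn_add2l.
  by rewrite ltnNge Hlen.
have ipab : ip a b <= 0 by apply: ob.
case: (dihedral Ra Rb pa pb ab ipab Hu claim3) => p [q [p0 q0 E]].
by rewrite wE -mulmxA E mulmxDr -!scalemxAr; apply: incone_comb.
Qed.
Lemma SC g : uniq g -> (forall x, x \in g -> Rp x /\ pos x) -> obtuse g ->
  forall ws a, isw g ws -> a \in g -> incone g (pw ws *m a) \/ incone g (- (pw ws *m a)).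
Proof.
move=> ug Hg ob ws a Hws ag.
have [Ra _] := Hg a ag; have RSa := Rp_RS Ra.
have Hw : Wd g (pw ws) by exists ws.
case: (leqP (lenw g (pw ws)) (lenw g (pw ws *m rf a))) => h.
  by left; apply: (HT ug Hg ob (N := (lenw g (pw ws)).+1)).
right.
have Hw' : Wd g (pw ws *m rf a) by apply: Wd_mul => //; exact: Wd_rf.
have E : pw ws *m rf a *m rf a = pw ws by rewrite -mulmxA rf_invol // mulmx1.
have := HT ug Hg ob (N := (lenw g (pw ws *m rf a)).+1) (leqnn _) Hw' ag.
rewrite E -mulmxA rf_neg // mulmxN; apply; exact: ltnW.
Qed.

Lemma ip_sumr (s : seq vec) (P : pred vec) (F : vec -> vec) y :
  ip y (\sum_(t <- s | P t) F t) = \sum_(t <- s | P t) ip y (F t).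
Proof. by rewrite /ip mulmx_sumr summxE. Qed.

Lemma ip_suml (s : seq vec) (P : pred vec) (F : vec -> vec) y :
  ip (\sum_(t <- s | P t) F t) y = \sum_(t <- s | P t) ip (F t) y.
Proof. by rewrite ip_sym ip_sumr; apply: eq_bigr => t _; rewrite ip_sym. Qed.

Lemma sum_ind (g : seq vec) a : uniq g -> a \in g ->
  \sum_(t <- g) (if t == a then 1 else 0) *: t = a.
Proof.
move=> ug ag; rewrite (perm_big _ (perm_to_rem ag)) big_cons eqxx scale1r big1_seq.
  exact: (addr0 a).
move=> t /andP [_]; rewrite mem_rem_uniq // inE => /andP [/negbTE -> _].
by rewrite scale0r.
Qed.

Lemma sum_single (g : seq vec) a (f : vec -> R) : uniq g -> a \in g ->
  (forall t, t \in g -> t != a -> f t = 0) -> \sum_(t <- g) f t *: t = f a *: a.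
Proof.
move=> ug ag H; rewrite (perm_big _ (perm_to_rem ag)) big_cons big1_seq.
  exact: (addr0 _).
move=> t /andP [_]; rewrite mem_rem_uniq // inE => /andP [ta tg].
by rewrite H // scale0r.
Qed.

Lemma indep g : uniq g -> (forall x, x \in g -> pos x) -> obtuse g ->
  forall f : vec -> R, \sum_(t <- g) f t *: t = 0 -> forall t, t \in g -> f t = 0.
Proof.
move=> ug Hg ob f S0.
pose fp t := if 0 < f t then f t else 0.
pose fm t := if f t < 0 then - f t else 0.
have fE : forall t, f t = fp t - fm t.
  move=> t; rewrite /fp /fm; case: (ltrgtP 0 (f t)) => h.
  - by rewrite subr0.
  - by rewrite sub0r opprK.
  - by rewrite -h subrr.
have fp0 : forall t, 0 <= fp t by move=> t; rewrite /fp; case: ifP => // /ltW.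
have fm0 : forall t, 0 <= fm t by move=> t; rewrite /fm; case: ifP => // h; rewrite oppr_ge0 ltW.
set v := \sum_(t <- g) fp t *: t.
set w := \sum_(t <- g) fm t *: t.
have vw : v = w.
  apply/eqP; rewrite -subr_eq0 -S0 /v /w -sumrB; apply/eqP; apply: eq_bigr => t _.
  by rewrite -scalerBl -fE.
have ipvw : ip v w <= 0.
  rewrite /v ip_suml big_seq; apply: sumr_le0 => s sg; rewrite ip_scalel /w ip_sumr.
  rewrite mulr_sumr big_seq; apply: sumr_le0 => t tg; rewrite ip_scaler mulrA.
  rewrite /fp /fm; case: ifP => hs; last by rewrite !mul0r.
  case: ifP => ht; last by rewrite mulr0 mul0r.
  apply: mulr_ge0_le0; first by apply: mulr_ge0; [exact: ltW | rewrite oppr_ge0 ltW].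
  apply: ob => //; apply/eqP => st; move: hs; rewrite st => h.
  by have := lt_trans h ht; rewrite ltxx.
have v0 : v = 0.
  apply/eqP; apply: contraT => vn; have := ip_pos vn.
  by rewrite {2}vw ltNge ipvw.
have w0 : w = 0 by rewrite -vw.
move=> t tg; rewrite fE.
have Hg' : forall x, x \in g -> pos x by [].
have fpt : fp t = 0.
  apply/eqP; apply: contraT => h.
  have hp : 0 < fp t by rewrite lt_def h fp0.
  have := pos_comb leT Hg' (fun x _ => fp0 x) tg hp.
  by rewrite -/v v0 => /not_pos0.
have fmt : fm t = 0.
  apply/eqP; apply: contraT => h.
  have hp : 0 < fm t by rewrite lt_def h fm0.
  have := pos_comb leT Hg' (fun x _ => fm0 x) tg hp.
  by rewrite -/w w0 => /not_pos0.
by rewrite fpt fmt subrr.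
Qed.
Lemma root_incone g : Inv g -> obtuse g -> forall b, Rp b -> pos b -> incone g b.
Proof.
move=> [ug Hg Hgen] ob b Rb pb.
case: (Hgen b Rb) => ws [a [Hws ag bE]].
have Hws' : isw g ws by apply/allP.
case: (SC ug Hg ob Hws' ag); rewrite -bE //.
move=> [f [F bf]]; exfalso.
have : le 0 (- b).
  by rewrite bf; apply: (nn_comb leT) => // x xg; case: (Hg x xg) => _ [].
move=> h; apply: (pos_opp leT pb); split => //.
by move=> /eqP; rewrite oppr_eq0 => /eqP; case: pb.
Qed.

Lemma final g : Inv g -> obtuse g -> forall a, base le Rp a <-> a \in g.
Proof.
move=> Ig ob; have [ug Hg Hgen] := Ig.
have Hgp : forall x, x \in g -> pos x by move=> x /Hg [].
have IND := indep ug Hgp ob.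
move=> a; split.
- move=> [Ra [pa nd]].
  have RSa := Rp_RS Ra.
  case: (root_incone Ig ob Ra pa) => f [F aE].
  have : exists d, [/\ d \in g, 0 < f d & 0 < ip a d].
    apply: contrapT => H.
    have := ip_pos (RS_neq0 RSa); rewrite {2}aE ip_sumr big_seq ltNge.
    move/negP; apply; apply: sumr_le0 => d dg; rewrite ip_scaler.
    case: (ltrgtP 0 (f d)) => h; last by rewrite -h mul0r.
      rewrite pmulr_rle0 // leNgt; apply/negP => h2; apply: H; exists d; split => //.
    by have := F d dg; rewrite leNgt h.
  move=> [d [dg fd ipd]].
  case: (eqVneq a d) => [->//|ad].
  have [Rd pd] := Hg d dg; have RSd := Rp_RS Rd.
  have dna : d != - a by apply: pos_neq_opp.
  have da : d != a by rewrite eq_sym.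
  case: (cartan RSa RSd da dna) => k [l [Ek El kl s1 s2]].
  have kp : (0 < k)%R by rewrite -(ltr0z R) -Ek (proj1 (pair_cr_sign d RSa)).
  have lp : (0 < l)%R by rewrite -s1.
  have Rad : Rp (a - d).
    have [k1|l1] : k = 1 \/ l = 1 by nia.
      have := Rp_opp (Rp_rf Ra Rd); rewrite rf_vec Ek k1 scale1r opprB //.
    by have := Rp_rf Rd Ra; rewrite rf_vec El l1 scale1r.
  case: (trich leT (a - d)) => [h|[h|h]].
  + by exfalso; apply: nd; exists d, (a - d); do 4?split => //; rewrite addrC subrK.
  + by move/eqP: h; rewrite subr_eq0 (negbTE ad).
  + have h' : pos (d - a) by rewrite -opprB.
    case: (root_incone Ig ob (Rp_opp Rad) h) => hf [HF dE].
    pose c := fun t => f t + hf t - (if t == d then 1 else 0).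
    have S : \sum_(t <- g) c t *: t = 0.
      rewrite /c; under eq_bigr => t _ do rewrite scalerBl scalerDl.
      rewrite sumrB big_split /= -aE -dE sum_ind //.
      by rewrite opprB addrC subrK subrr.
    have fz : forall t, t \in g -> t != d -> f t = 0.
      move=> t tg td; have := IND c S t tg; rewrite /c (negbTE td) subr0 => /eqP.
      rewrite paddr_eq0 ?F ?HF // => /andP [/eqP -> _] //.
    have aE' : a = f d *: d by rewrite aE; apply: sum_single.
    case: (RSred RSd (eq_ind _ RS RSa _ aE')) => t1.
      by move: ad; rewrite aE' t1 scale1r eqxx.
    by move: fd; rewrite t1 ltr0N1.
- move=> ag; have [Ra pa] := Hg a ag; split => //; split => //.
  move=> [b [c [Rb [pb [Rc [pc abc]]]]]].
  case: (root_incone Ig ob Rb pb) => fb [Fb bE].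
  case: (root_incone Ig ob Rc pc) => fc [Fc' cE].
  pose h := fun t => fb t + fc t - (if t == a then 1 else 0).
  have S : \sum_(t <- g) h t *: t = 0.
    rewrite /h; under eq_bigr => t _ do rewrite scalerBl scalerDl.
    by rewrite sumrB big_split /= -bE -cE sum_ind // abc subrr.
  have fz : forall t, t \in g -> t != a -> fb t = 0.
    move=> t tg ta; have := IND h S t tg; rewrite /h (negbTE ta) subr0 => /eqP.
    by rewrite paddr_eq0 ?Fb ?Fc' // => /andP [/eqP -> _].
  have bE' : b = fb a *: a by rewrite bE; apply: sum_single.
  case: (RSred (Rp_RS Ra) (eq_ind _ RS (Rp_RS Rb) _ bE')) => t1.
    move: abc; rewrite bE' t1 scale1r => /eqP; rewrite -subr_eq0 opprD addrA subrr sub0r oppr_eq0.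
    by move/eqP => c0; case: pc.
  by move: pb; rewrite bE' t1 scaleN1r; apply: (pos_opp leT pa).
Qed.
Definition g0 : seq vec := undup bl.

Lemma Wp_word w : Wp w -> exists ws, (forall t, t \in ws -> t \in g0) /\ w = pw ws.
Proof.
elim => [|t Ht|g h _ [ws1 [H1 E1]] _ [ws2 [H2 E2]]|g _ [ws [H E]]].
- by exists [::].
- case: (Tl_rf Ht) => b [bb ->]; exists [:: b]; split; last by rewrite /= mulmx1.
  by move=> t'; rewrite inE => /eqP ->; rewrite mem_undup.
- exists (ws1 ++ ws2); split; last by rewrite pw_cat E1 E2.
  by move=> t; rewrite mem_cat => /orP [/H1|/H2].
- exists (rev ws); split; first by move=> t; rewrite mem_rev; exact: H.
  rewrite E; apply: invmx_uniq; apply: pw_rev => t /H.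
  by rewrite mem_undup => /bl_RS [].
Qed.

Lemma Inv_g0 : Inv g0.
Proof.
split; first exact: undup_uniq.
  move=> x; rewrite mem_undup => xb; split; first exact: bl_Rp.
  by case: (bl_RS xb) => _ [].
move=> v [w [b [Hw Hb ->]]].
case: (Wp_word Hw) => ws [Hws ->]; exists ws, b; split => //.
by rewrite mem_undup.
Qed.

Lemma Tl_g0 : Tl =i map rf g0.
Proof.
move=> t; apply/idP/idP.
  by move=> /Tl_rf [b [bb ->]]; apply: map_f; rewrite mem_undup.
by move=> /mapP [b]; rewrite mem_undup => bb ->; case: (bl_RS bb) => _ [].
Qed.

Lemma part4 : exists B, nielsen_reach Tl B /\
  forall t, t \in B <-> exists a, base le Rp a /\ refl_in RS a t.
Proof.
have [B [g' [r1 r2 r3 r4]]] := nielsen_loop (ltnSn (mu g0)) Inv_g0 Tl_g0.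
exists B; split => // t; rewrite r2; split.
  move=> /mapP [a ag ->]; exists a; split; first by apply/(final r3 r4).
  have [Ra _] := (match r3 with And3 _ H _ => H end) a ag.
  by apply/(refl_inE _ (Rp_RS Ra)).
move=> [a [ba Hrefl]].
have ag := (proj1 (final r3 r4 a) ba).
have [Ra _] := (match r3 with And3 _ H _ => H end) a ag.
by rewrite (proj1 (refl_inE _ (Rp_RS Ra)) Hrefl); apply: map_f.
Qed.

Lemma main_result :
  let W' := gen (fun t => t \in [seq p.2 | p <- TB]) in
  let R' := fun v => exists w b, [/\ W' w, b \in [seq p.1 | p <- TB] &
                                    v = w *m b] in
  let V' := lspan R' in
  [/\ root_system_in V' R',
      (forall w, W' w -> exists h, weyl R' h /\ forall u, V' u -> w *m u = h *m u),
      (forall h, weyl R' h -> exists w, W' w /\ forall u, V' u -> w *m u = h *m u)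
    & exists B, nielsen_reach [seq p.2 | p <- TB] B /\
        forall t, t \in B <-> exists a, base le R' a /\ refl_in RS a t].
Proof.
move=> W' R' V'.
exact: (And4 part1 part2 part3 part4).
Qed.

End Form.

Theorem theorem1p14 (R : realType) (n : nat)
  (RS : 'cV[R]_n -> Prop) (le : 'cV[R]_n -> 'cV[R]_n -> Prop)
  (TB : seq ('cV[R]_n * 'M[R]_n)) :
  root_system_in (fun _ => True) RS ->
  reduced RS ->
  total_ordering le ->
  (forall p, p \in TB -> [/\ RS p.1, positive le p.1 & refl_in RS p.1 p.2]) ->
  let W' := gen (fun t => t \in [seq p.2 | p <- TB]) in
  let R' := fun v => exists w b, [/\ W' w, b \in [seq p.1 | p <- TB] &
                                    v = w *m b] in
  let V' := lspan R' in
  [/\ root_system_in V' R',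
      (forall w, W' w -> exists h, weyl R' h /\ forall u, V' u -> w *m u = h *m u),
      (forall h, weyl R' h -> exists w, W' w /\ forall u, V' u -> w *m u = h *m u)
    & exists B, nielsen_reach [seq p.2 | p <- TB] B /\
        forall t, t \in B <-> exists a, base le R' a /\ refl_in RS a t].
Proof.
move=> H1 H2 H3 H4.
exact: (main_result H1 H2 H3 H4).
Qed.
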